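(* Let $n\ge2$, $\rho\ge0$, $\xi_n=\frac{n+1}{n-1}$, and let $\lambda_0,\dots,\lambda_{n-1}$ be the eigenvalues of $K_n(\rho)$ labeled as described in the context. Then $K_n(\rho)$ has exactly two extraordinary eigenvalues ($\lambda_0$ and $\lambda_1$) when $\rho>\xi_n$, exactly one ($\lambda_0$) when $1<\rho\le\xi_n$, and none when $0\le\rho\le1$. Furthermore: when $\rho=0$: $\lambda_{n-1}=\dots=\lambda_1=\lambda_0=1$; when $0<\rho<1$: $0<\frac{1-\rho}{1+\rho}<\lambda_{n-1}<\lambda_{n-2}<\dots<\lambda_1<\lambda_0<\frac{1+\rho}{1-\rho}$; when $\rho=1$: $\lambda_1=\dots=\lambda_{n-1}=0<\lambda_0=n$; when $1<\rho<\xi_n$: $-\frac{\rho+1}{\rho-1}<\lambda_1<\lambda_2<\dots<\lambda_{n-1}<-\frac{\rho-1}{\rho+1}<0<n<\lambda_0$; when $\rho=\xi_n$: $-n=\lambda_1<\lambda_2<\dots<\lambda_{n-1}<-\frac1n<0<n<\lambda_0$; when $\rho>\xi_n$: $\lambda_1<-n<-\frac{\rho+1}{\rho-1}<\lambda_2<\dots<\lambda_{n-1}<-\frac{\rho-1}{\rho+1}<0<n<\lambda_0$.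
   Context: $K_n(\rho)=\left[\rho^{|j-k|}\right]_{j,k=1}^n$ (with $\rho^0=1$). Ordinary/extraordinary: with $\sigma(\rho,\theta)=\frac{1-\rho^2}{1-2\rho\cos\theta+\rho^2}$ and $\mathrm{range}\{\sigma(\rho,\theta)\}=\{\sigma(\rho,\theta):\theta\in(-\pi,\pi]\}$, for real $\rho\notin\{\pm1\}$ an eigenvalue is ordinary if it lies in $\mathrm{range}\{\sigma(\rho,\theta)\}$; for $\rho\in\{0,\pm1\}$ all eigenvalues are ordinary; extraordinary means not ordinary. Labeling: $\lambda_k=\frac{1-\rho^2}{1-2\rho\cos\mu_k+\rho^2}=(-1)^k\frac{\sin n\mu_k}{\sin\mu_k}$ (indeterminate forms read as limits), where, with $c_n^{(t)}(\mu)=\frac{\cos\frac{\mu(n+1)}{2}}{\cos\frac{\mu(n-1)}{2}}$, $s_n^{(t)}(\mu)=\frac{\sin\frac{\mu(n+1)}{2}}{\sin\frac{\mu(n-1)}{2}}$, $c_n^{(h)}(x)=c_n^{(t)}(ix)$, $s_n^{(h)}(x)=s_n^{(t)}(ix)$ (extended continuously at $0$), $\alpha_k=\frac{(k-1)\pi}{n-1}$, $\beta_k=\frac{k\pi}{n}$, $\gamma_k=\frac{(k+1)\pi}{n+1}$: $\mu_0=ix_0$ with $x_0$ the unique root of $c_n^{(h)}(x)=\rho$ in $[0,\infty)$ if $\rho\ge1$, and the unique root of $c_n^{(t)}(\mu)=\rho$ in $[0,\gamma_0]$ if $0\le\rho\le1$; $\mu_1=ix_1$ with $x_1$ the unique root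 of $s_n^{(h)}(x)=\rho$ in $[0,\infty)$ if $\rho\ge\xi_n$, the unique root of $s_n^{(t)}(\mu)=\rho$ in $[0,\beta_1]$ if $1\le\rho\le\xi_n$, and in $[\beta_1,\gamma_1]$ if $0\le\rho\le1$; for even $k\ge2$ ($k\le n-1$), $\mu_k$ is the unique root of $c_n^{(t)}(\mu)=\rho$ in $(\alpha_k,\beta_k]$ if $\rho\ge1$ and in $[\beta_k,\gamma_k]$ if $0\le\rho\le1$; for odd $k\ge3$ ($k\le n-1$), the same with $s_n^{(t)}$ in place of $c_n^{(t)}$. *)

(* Defs.v *)
From Stdlib Require Import Reals.
From mathcomp Require Import all_boot all_algebra.
From mathcomp Require Import Rstruct.

Set Implicit Arguments.
Unset Strict Implicit.
Unset Printing Implicit Defensive.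

Local Open Scope R_scope.

(* The Kac-Murdock-Szego matrix K_n(rho) = [rho^|j-k|], with rho^0 = 1. *)
Definition distn (i j : nat) : nat := if (i <= j)%N then (j - i)%N else (i - j)%N.

Definition Kmat (n : nat) (rho : R) : 'M[R]_n :=
  \matrix_(i < n, j < n) pow rho (distn i j).

Definition sigma (rho theta : R) : R :=
  (1 - rho ^ 2) / (1 - 2 * rho * cos theta + rho ^ 2).

Definition in_sigma_range (rho lam : R) : Prop :=
  exists theta, - PI < theta <= PI /\ lam = sigma rho theta.

Definition ordinary (rho lam : R) : Prop :=
  rho = 0 \/ rho = 1 \/ rho = -1 \/ in_sigma_range rho lam.

Definition extraordinary (rho lam : R) : Prop := ~ ordinary rho lam.

Definition xi (n : nat) : R := (INR n + 1) / (INR n - 1).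
Definition alpha (n k : nat) : R := (INR k - 1) * PI / (INR n - 1).
Definition beta (n k : nat) : R := INR k * PI / INR n.
Definition gamma (n k : nat) : R := (INR k + 1) * PI / (INR n + 1).

Definition ct (n : nat) (mu : R) : R :=
  cos (mu * (INR n + 1) / 2) / cos (mu * (INR n - 1) / 2).
Definition st (n : nat) (mu : R) : R :=
  if Req_EM_T mu 0 then (INR n + 1) / (INR n - 1)
  else sin (mu * (INR n + 1) / 2) / sin (mu * (INR n - 1) / 2).
(* c_n^(h)(x) = c_n^(t)(ix), s_n^(h)(x) = s_n^(t)(ix) (extended at 0) *)
Definition ch (n : nat) (x : R) : R :=
  cosh (x * (INR n + 1) / 2) / cosh (x * (INR n - 1) / 2).
Definition sh (n : nat) (x : R) : R :=
  if Req_EM_T x 0 then (INR n + 1) / (INR n - 1)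
  else sinh (x * (INR n + 1) / 2) / sinh (x * (INR n - 1) / 2).

(* sin(n mu)/sin(mu), indeterminate forms read as limits *)
Definition Dt (n : nat) (mu : R) : R :=
  if Req_EM_T (sin mu) 0 then INR n * cos (INR n * mu) / cos mu
  else sin (INR n * mu) / sin mu.
(* sin(n i x)/sin(i x) = sinh(n x)/sinh(x), limit n at x = 0 *)
Definition Dh (n : nat) (x : R) : R :=
  if Req_EM_T x 0 then INR n else sinh (INR n * x) / sinh x.

Definition unique_root (f : R -> R) (rho : R) (I : R -> Prop) (mu : R) : Prop :=
  I mu /\ f mu = rho /\ (forall nu, I nu -> f nu = rho -> nu = mu).

(* lam is the eigenvalue lambda_k of K_n(rho) under the labeling of the paper:
   lambda_k = (-1)^k sin(n mu_k)/sin(mu_k) with mu_k as described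
   (mu_k = i x_k in the hyperbolic cases). *)
Definition labeled (n : nat) (rho : R) (k : nat) (lam : R) : Prop :=
  if (k == 0)%N then
    (1 <= rho -> exists x, unique_root (ch n) rho (fun y => 0 <= y) x /\ lam = Dh n x) /\
    (0 <= rho <= 1 -> exists mu,
        unique_root (ct n) rho (fun m => 0 <= m <= gamma n 0) mu /\ lam = Dt n mu)
  else if (k == 1)%N then
    (xi n <= rho -> exists x, unique_root (sh n) rho (fun y => 0 <= y) x /\ lam = - Dh n x) /\
    (1 <= rho <= xi n -> exists mu,
        unique_root (st n) rho (fun m => 0 <= m <= beta n 1) mu /\ lam = - Dt n mu) /\
    (0 <= rho <= 1 -> exists mu,
        unique_root (st n) rho (fun m => beta n 1 <= m <= gamma n 1) mu /\ lam = - Dt n mu)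
  else
    let f := if odd k then st n else ct n in
    (1 <= rho -> exists mu,
        unique_root f rho (fun m => alpha n k < m <= beta n k) mu /\ lam = (-1) ^ k * Dt n mu) /\
    (0 <= rho <= 1 -> exists mu,
        unique_root f rho (fun m => beta n k <= m <= gamma n k) mu /\ lam = (-1) ^ k * Dt n mu).

(* Main.v *)
Require Import Defs.
From Stdlib Require Import Reals.
From mathcomp Require Import all_boot all_algebra.
From mathcomp Require Import Rstruct.
From Stdlib Require Import Lra.
Import Defs.
Local Open Scope R_scope.


Lemma key_c a b rho : cos b <> 0 -> sin (a-b) <> 0 -> rho = cos a / cos b ->
  sin (a+b) / sin (a-b) * (1 - 2*rho*cos (a-b) + rho^2) = 1 - rho^2.
Proof.
intros hb hs ->.
assert (ha2 := sin2_cos2 a). assert (hb2 := sin2_cos2 b). unfold Rsqr in *.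
assert (P1 : sin (a+b) * sin (a-b) = cos b ^2 - cos a ^2).
{ rewrite sin_plus sin_minus.
  transitivity (cos b ^2 * (sin a * sin a + cos a * cos a) - cos a^2 * (sin b * sin b + cos b * cos b)).
  ring. rewrite ha2 hb2. ring. }
assert (P2 : sin (a-b) ^2 = cos b ^2 - 2 * cos a * cos b * cos (a-b) + cos a ^2).
{ rewrite cos_minus sin_minus.
  transitivity (cos b ^2 * (sin a * sin a + cos a * cos a) + cos a^2 * (sin b * sin b + cos b * cos b)
   - 2 * cos a ^2 * cos b ^2 - 2 * cos a * cos b * sin a * sin b).
  ring. rewrite ha2 hb2. ring. }
replace (1 - 2 * (cos a / cos b) * cos (a - b) + (cos a / cos b) ^ 2)
  with (sin (a-b) ^2 / cos b ^2) by (rewrite P2; field; auto).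
replace (1 - (cos a / cos b) ^ 2) with (sin (a+b) * sin (a-b) / cos b ^2)
  by (rewrite P1; field; auto).
field; auto.
Qed.

Lemma key_s a b rho : sin b <> 0 -> sin (a-b) <> 0 -> rho = sin a / sin b ->
  - (sin (a+b) / sin (a-b)) * (1 - 2*rho*cos (a-b) + rho^2) = 1 - rho^2.
Proof.
intros hb hs ->.
assert (ha2 := sin2_cos2 a). assert (hb2 := sin2_cos2 b). unfold Rsqr in *.
assert (P1 : sin (a+b) * sin (a-b) = sin a ^2 - sin b ^2).
{ rewrite sin_plus sin_minus.
  transitivity (sin a ^2 * (sin b * sin b + cos b * cos b) - sin b^2 * (sin a * sin a + cos a * cos a)).
  ring. rewrite ha2 hb2. ring. }
assert (P2 : sin (a-b) ^2 = sin b ^2 - 2 * sin a * sin b * cos (a-b) + sin a ^2).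
{ rewrite cos_minus sin_minus.
  transitivity (sin a ^2 * (sin b * sin b + cos b * cos b) + sin b^2 * (sin a * sin a + cos a * cos a)
   - 2 * sin a ^2 * sin b ^2 - 2 * cos a * cos b * sin a * sin b).
  ring. rewrite ha2 hb2. ring. }
replace (1 - 2 * (sin a / sin b) * cos (a - b) + (sin a / sin b) ^ 2)
  with (sin (a-b) ^2 / sin b ^2) by (rewrite P2; field; auto).
replace (1 - (sin a / sin b) ^ 2) with (- (sin (a+b) * sin (a-b)) / sin b ^2)
  by (rewrite P1; field; auto).
field; auto.
Qed.


Lemma lt_div a b c d : 0 < b -> 0 < d -> a*d < c*b -> a/b < c/d.
Proof. intros hb hd h.
assert (E : a/b - c/d = (a*d - c*b)/(b*d)) by (field; lra).
assert ((a*d - c*b)/(b*d) < 0) by (apply Rdiv_neg_pos; nra). lra. Qed.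

Lemma lt_div_l x y z : 0 < y -> x < z*y -> x/y < z.
Proof. intros hy h. assert (E : x/y - z = (x - z*y)/y) by (field; lra).
assert ((x - z*y)/y < 0) by (apply Rdiv_neg_pos; lra). lra. Qed.

Lemma lt_div_r x y z : 0 < y -> z*y < x -> z < x/y.
Proof. intros hy h. assert (E : x/y - z = (x - z*y)/y) by (field; lra).
assert (0 < (x - z*y)/y) by (apply Rdiv_lt_0_compat; lra). lra. Qed.

Lemma INR_ge2 {n} : (2 <= n)%N -> 2 <= INR n.
Proof. move/leP=> h. change 2 with (INR 2). by apply le_INR. Qed.

Lemma INR_ltS {k n} : (k < n)%N -> INR k + 1 <= INR n.
Proof. move/leP=> h. rewrite -S_INR. by apply le_INR. Qed.

Lemma INR_ge1 {k} : (1 <= k)%N -> 1 <= INR k.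
Proof. move/leP=> h. change 1 with (INR 1). by apply le_INR. Qed.

Section Int.
Variables (n k : nat).
Hypothesis hn : (2 <= n)%N.

Lemma beta_pos : (1 <= k)%N -> 0 < beta n k.
Proof. move=> hk. have := INR_ge1 hk. have := INR_ge2 hn. have := PI_RGT_0.
rewrite /beta => *. apply Rdiv_lt_0_compat; nra. Qed.

Lemma gamma_lt_pi : (k < n)%N -> gamma n k < PI.
Proof. move=> hk. have := INR_ltS hk. have := INR_ge2 hn. have := PI_RGT_0.
rewrite /gamma => *. apply lt_div_l; nra. Qed.

Lemma beta_lt_pi : (k < n)%N -> beta n k < PI.
Proof. move=> hk. have := INR_ltS hk. have := INR_ge2 hn. have := PI_RGT_0.
rewrite /beta => *. apply lt_div_l; nra. Qed.

Lemma gamma_lt_beta : gamma n k < beta n k.+1.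
Proof. have := pos_INR k. have := INR_ge2 hn. have := PI_RGT_0.
rewrite /gamma /beta S_INR => *. apply lt_div; nra. Qed.

Lemma beta_lt_alpha : (1 <= k)%N -> beta n k < alpha n k.+1.
Proof. move=> hk. have := INR_ge1 hk. have := INR_ge2 hn. have := PI_RGT_0.
rewrite /alpha /beta S_INR => *. replace (INR k + 1 - 1) with (INR k) by ring.
apply lt_div; nra. Qed.

Lemma alpha_pos : (2 <= k)%N -> 0 < alpha n k.
Proof. move=> hk. have := INR_ge2 hk. have := INR_ge2 hn. have := PI_RGT_0.
rewrite /alpha => *. apply Rdiv_lt_0_compat; nra. Qed.

Lemma gamma_ge0 : 0 <= gamma n k.
Proof. have := pos_INR k. have := INR_ge2 hn. have := PI_RGT_0.
rewrite /gamma => *. left. apply Rdiv_lt_0_compat; nra. Qed.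

End Int.


Lemma pow_m1 k : (-1)^k = if odd k then -1 else 1.
Proof. elim: k => [|k IH] /=; first by []. rewrite IH. case: (odd k) => /=; lra. Qed.

Definition Dd (rho th : R) : R := 1 - 2*rho*cos th + rho^2.

Lemma sigmaE rho th : sigma rho th = (1 - rho^2) / Dd rho th.
Proof. by []. Qed.

Lemma D_pos rho th : sin th <> 0 -> 0 < Dd rho th.
Proof. move=> h. have := sin2_cos2 th. have := Rsqr_pos_lt _ h. have := pow2_ge_0 (rho - cos th). rewrite /Rsqr /Dd => *. nra. Qed.

Lemma D_ge rho th : 0 <= rho -> (rho - 1)^2 <= Dd rho th.
Proof. move=> h. have := COS_bound th. rewrite /Dd => *. nra. Qed.

Lemma D_le rho th : 0 <= rho -> Dd rho th <= (rho + 1)^2.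
Proof. move=> h. have := COS_bound th. rewrite /Dd => *. nra. Qed.

Lemma D_gt rho th : 0 < rho -> cos th < 1 -> (rho - 1)^2 < Dd rho th.
Proof. move=> h c. rewrite /Dd => *. nra. Qed.

Lemma D_lt rho th : 0 < rho -> -1 < cos th -> Dd rho th < (rho + 1)^2.
Proof. move=> h c. rewrite /Dd => *. nra. Qed.

Lemma D_mono rho t1 t2 : 0 < rho -> 0 <= t1 -> t1 < t2 -> t2 <= PI -> Dd rho t1 < Dd rho t2.
Proof. move=> h *. have : cos t2 < cos t1 by apply cos_decreasing_1; lra.
rewrite /Dd => *. nra. Qed.

Lemma div_lt_num c d1 d2 : 0 < c -> 0 < d1 -> d1 < d2 -> c / d2 < c / d1.
Proof. move=> *. unfold Rdiv. apply Rmult_lt_compat_l => //. apply Rinv_lt_contravar; nra. Qed.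

Lemma div_lt_numn c d1 d2 : c < 0 -> 0 < d1 -> d1 < d2 -> c / d1 < c / d2.
Proof. move=> *. have := @div_lt_num (-c) d1 d2. 
have E1 : -c/d1 = - (c/d1) by field; lra.
have E2 : -c/d2 = - (c/d2) by field; lra. rewrite E1 E2. lra. Qed.

Lemma cos_lt1 th : 0 < th -> th <= PI -> cos th < 1.
Proof. move=> *. rewrite -cos_0. apply cos_decreasing_1; lra. Qed.

Lemma cos_gtm1 th : 0 <= th -> th < PI -> -1 < cos th.
Proof. move=> *. rewrite -cos_PI. apply cos_decreasing_1; lra. Qed.

Lemma sinh_add u x : sinh (u + x) = sinh u * cosh x + cosh u * sinh x.
Proof. rewrite /sinh /cosh Ropp_plus_distr !exp_plus. field. Qed.

Lemma sinh_pos u : 0 < u -> 0 < sinh u.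
Proof. move=> h. rewrite /sinh. have := exp_increasing (-u) u. lra. Qed.

Lemma sinh_0 : sinh 0 = 0.
Proof. rewrite /sinh Ropp_0. lra. Qed.

Lemma cosh_ge1 u : 1 <= cosh u.
Proof. rewrite /cosh exp_Ropp. have := exp_pos u. set e := exp u => he.
have E : (e + / e) / 2 - 1 = (e - 1)^2 / (2 * e) by field; lra.
have : 0 <= (e - 1)^2 / (2 * e). apply Rmult_le_pos. apply pow2_ge_0. left; apply Rinv_0_lt_compat; lra.
lra. Qed.

Lemma cosh_gt1 u : 0 < u -> 1 < cosh u.
Proof. move=> hu. rewrite /cosh exp_Ropp. have := exp_increasing 0 u hu. rewrite exp_0.
set e := exp u => he.
have E : (e + / e) / 2 - 1 = (e - 1)^2 / (2 * e) by field; lra.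
have : 0 < (e - 1)^2 / (2 * e). apply Rdiv_lt_0_compat; nra.
lra. Qed.

Lemma cosh_0 : cosh 0 = 1.
Proof. rewrite /cosh Ropp_0 exp_0. lra. Qed.

Lemma sinh_mul_ge x m : 0 < x -> INR m * sinh x <= sinh (INR m * x).
Proof. move=> hx. have := sinh_pos _ hx => sx.
elim: m => [|m IH]. rewrite /= !Rmult_0_l sinh_0; lra.
rewrite S_INR !Rmult_plus_distr_r !Rmult_1_l sinh_add.
have := cosh_ge1 (INR m * x). have := cosh_ge1 x. have := pos_INR m => *.
have h0 : 0 <= sinh (INR m * x) by nra.
have := Rmult_le_compat_l _ _ _ h0 (cosh_ge1 x).
have := Rmult_le_compat_r _ _ _ (Rlt_le _ _ sx) (cosh_ge1 (INR m * x)). lra. Qed.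

Lemma sinh_mul_gt x n : (2 <= n)%N -> 0 < x -> INR n * sinh x < sinh (INR n * x).
Proof. case: n => [|m] // hm hx. have := sinh_pos _ hx => sx.
rewrite S_INR !Rmult_plus_distr_r !Rmult_1_l sinh_add.
have hm1 : 1 <= INR m. by change 1 with (INR 1); apply le_INR; apply/leP.
have := sinh_pos (INR m * x). move/(_ ltac:(nra)) => s2.
have := Rmult_lt_compat_l _ _ _ s2 (cosh_gt1 _ hx).
have := Rmult_le_compat_r _ _ _ (Rlt_le _ _ sx) (cosh_ge1 (INR m * x)). have := sinh_mul_ge x m hx => *. lra. Qed.

Lemma Dh_gt n x : (2 <= n)%N -> 0 < x -> INR n < Dh n x.
Proof. move=> hn hx. rewrite /Dh. destruct (Req_EM_T x 0) as [e|ne]; first lra.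
have := sinh_pos _ hx. have := sinh_mul_gt x n hn hx => *. apply lt_div_r; lra. Qed.

Lemma Dt_eq n mu : 0 < mu < PI -> Dt n mu = sin (INR n * mu) / sin mu.
Proof. move=> hm. have hs := sin_gt_0 mu (proj1 hm) (proj2 hm). rewrite /Dt. destruct (Req_EM_T (sin mu) 0) as [e|ne]; [lra|by []]. Qed.

Lemma lam_sigma n k rho mu lam : 0 < rho -> 0 < mu < PI ->
  (if odd k then st n else ct n) mu = rho -> lam = (-1)^k * Dt n mu -> lam = sigma rho mu.
Proof.
move=> hr hmu hf ->. rewrite Dt_eq // pow_m1 sigmaE.
have sm : sin mu <> 0 by have := sin_gt_0 mu (proj1 hmu) (proj2 hmu); lra.
have e1 : mu = mu*(INR n+1)/2 - mu*(INR n-1)/2 by field.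
have e2 : INR n * mu = mu*(INR n+1)/2 + mu*(INR n-1)/2 by field.
have hD := D_pos rho mu sm. rewrite /Dd in hD.
case: (odd k) hf => hf.
- rewrite /st in hf. destruct (Req_EM_T mu 0) as [e|ne]; first lra. simpl in hf.
  have sb : sin (mu*(INR n-1)/2) <> 0.
  { move=> h. rewrite h /Rdiv Rinv_0 Rmult_0_r in hf. lra. }
  have sab : sin (mu*(INR n+1)/2 - mu*(INR n-1)/2) <> 0 by rewrite -e1.
  have H := key_s _ _ rho sb sab (esym hf).
  rewrite -e1 -e2 in H. rewrite -H /Dd. field. repeat split; try lra; auto.
- rewrite /ct in hf.
  have sb : cos (mu*(INR n-1)/2) <> 0.
  { move=> h. rewrite h /Rdiv Rinv_0 Rmult_0_r in hf. lra. }
  have sab : sin (mu*(INR n+1)/2 - mu*(INR n-1)/2) <> 0 by rewrite -e1.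
  have H := key_c _ _ rho sb sab (esym hf).
  rewrite -e1 -e2 in H. rewrite -H /Dd. field. repeat split; try lra; auto.
Qed.

Lemma lab_low n rho k lam : (k < n)%N -> 0 <= rho <= 1 -> labeled n rho k lam ->
  exists mu, beta n k <= mu <= gamma n k /\ (if odd k then st n else ct n) mu = rho /\
    lam = (-1)^k * Dt n mu.
Proof.
move=> hk hr. rewrite /labeled. case: k hk => [|[|k]] hk /=.
- move=> [_ H]. case: (H hr) => mu [[hI [hf _]] ->]. exists mu.
  have -> : beta n 0 = 0 by rewrite /beta /= /Rdiv !Rmult_0_l.
  rewrite Rmult_1_l. by [].
- move=> [_ [_ H]]. case: (H hr) => mu [[hI [hf _]] ->]. exists mu.
  split => //. split => //. ring.
- move=> [_ H]. case: (H hr) => mu [[hI [hf _]] ->]. exists mu. by [].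
Qed.

Lemma lab_high n rho k lam : (2 <= k)%N -> 1 <= rho -> labeled n rho k lam ->
  exists mu, alpha n k < mu <= beta n k /\ (if odd k then st n else ct n) mu = rho /\
    lam = (-1)^k * Dt n mu.
Proof.
move=> hk hr. rewrite /labeled. case: k hk => [|[|k]] hk //=.
move=> [H _]. case: (H hr) => mu [[hI [hf _]] ->]. exists mu. by [].
Qed.

Lemma lab_high1 n rho lam : 1 <= rho <= xi n -> labeled n rho 1 lam ->
  exists mu, (0 <= mu <= beta n 1) /\ st n mu = rho /\
    (forall nu, 0 <= nu <= beta n 1 -> st n nu = rho -> nu = mu) /\ lam = - Dt n mu.
Proof.
move=> hr. rewrite /labeled /=. move=> [_ [H _]]. case: (H hr) => mu [[hI [hf hu]] ->].
by exists mu.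
Qed.

Lemma lab0_h n rho lam : 1 <= rho -> labeled n rho 0 lam ->
  exists x, 0 <= x /\ ch n x = rho /\ (forall y, 0 <= y -> ch n y = rho -> y = x) /\ lam = Dh n x.
Proof.
move=> hr. rewrite /labeled /=. move=> [H _]. case: (H hr) => x [[hI [hf hu]] ->].
by exists x.
Qed.

Lemma lab1_h n rho lam : xi n <= rho -> labeled n rho 1 lam ->
  exists x, 0 <= x /\ sh n x = rho /\ lam = - Dh n x.
Proof.
move=> hr. rewrite /labeled /=. move=> [H _]. case: (H hr) => x [[hI [hf hu]] ->].
by exists x.
Qed.

Lemma ct_0 n : ct n 0 = 1.
Proof. rewrite /ct. replace (0 * (INR n + 1) / 2) with 0 by field.
replace (0 * (INR n - 1) / 2) with 0 by field. rewrite cos_0. field. Qed.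

Lemma st_0 n : st n 0 = xi n.
Proof. rewrite /st. destruct (Req_EM_T 0 0) as [e|ne]; [by []|lra]. Qed.

Lemma ch_0 n : ch n 0 = 1.
Proof. rewrite /ch. replace (0 * (INR n + 1) / 2) with 0 by field.
replace (0 * (INR n - 1) / 2) with 0 by field. rewrite cosh_0. field. Qed.

Lemma sh_0 n : sh n 0 = xi n.
Proof. rewrite /sh. destruct (Req_EM_T 0 0) as [e|ne]; [by []|lra]. Qed.

Lemma Dh_0 n : Dh n 0 = INR n.
Proof. rewrite /Dh. destruct (Req_EM_T 0 0) as [e|ne]; [by []|lra]. Qed.

Lemma Dt_0 n : Dt n 0 = INR n.
Proof. rewrite /Dt sin_0. destruct (Req_EM_T 0 0) as [e|ne]; last lra.
simpl. rewrite Rmult_0_r cos_0. field. Qed.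

Lemma xi_gt1 n : (2 <= n)%N -> 1 < xi n.
Proof. move=> hn. have := INR_ge2 hn. rewrite /xi => h. apply lt_div_r; lra. Qed.

Lemma sigma_xi0 n : (2 <= n)%N -> sigma (xi n) 0 = - INR n.
Proof. move=> hn. have := INR_ge2 hn => h. rewrite sigmaE /Dd cos_0 /xi. field.
split; [lra|]. assert (E: (INR n - 1 - 2 * (INR n + 1)) * (INR n - 1) + (INR n + 1) ^ 2 = 4) by ring. lra. Qed.

Lemma low_sigma n rho k lam : (2 <= n)%N -> (k < n)%N -> 0 < rho <= 1 ->
  ((1 <= k)%N \/ rho < 1) -> labeled n rho k lam ->
  exists mu, beta n k <= mu <= gamma n k /\ 0 < mu < PI /\ lam = sigma rho mu.
Proof.
move=> hn hk hr hk1 hl. case: (lab_low n rho k lam hk (ltac:(lra)) hl) => mu [hI [hf hlam]].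
have hpi := gamma_lt_pi n k hn hk.
have mpos : 0 < mu.
{ clear hl. case: k hk hk1 hI hf hlam hpi => [|k] hk hk1 hI hf hlam hpi.
  - have hb : beta n 0 = 0 by rewrite /beta /= /Rdiv !Rmult_0_l.
    case: hk1 => [//|h].
    case: (Rle_lt_or_eq_dec 0 mu) => [|//|e]; first lra.
    rewrite /= -e ct_0 in hf. lra.
  - have := beta_pos n k.+1 hn isT. lra. }
exists mu. split => //. split; first lra. apply: lam_sigma hf hlam => //; lra.
Qed.

Lemma high_sigma n rho k lam : (2 <= n)%N -> (1 <= k)%N -> (k < n)%N -> 1 < rho ->
  ((2 <= k)%N \/ rho <= xi n) -> labeled n rho k lam ->
  exists mu, 0 <= mu < PI /\ mu <= beta n k /\ ((2 <= k)%N -> alpha n k < mu) /\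
    (mu = 0 -> rho = xi n) /\ lam = sigma rho mu.
Proof.
move=> hn hk1 hk hr hd hl. have hbpi := beta_lt_pi n k hn hk.
case: k hk1 hk hd hl hbpi => [|[|k]] // hk1 hk hd hl hbpi.
- have hx : rho <= xi n by case: hd.
  case: (lab_high1 n rho lam (ltac:(lra)) hl) => mu [hI [hf [hu hlam]]].
  case: (Rle_lt_or_eq_dec 0 mu (proj1 hI)) => [mp|e].
  + exists mu. split; first lra. split; first lra. split => //. split; first lra.
    apply: (lam_sigma n 1 rho mu lam) => //; try lra. 
  + rewrite -e st_0 in hf. exists 0. split; first lra. split; first lra. split => //.
    split; first by move=> _. rewrite hlam -e Dt_0 -hf sigma_xi0 //.
- case: (lab_high n rho k.+2 lam isT (ltac:(lra)) hl) => mu [hI [hf hlam]].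
  have := alpha_pos n k.+2 hn isT => ha.
  exists mu. split; first lra. split; first lra. split; first by move=> _; lra.
  split; first lra. apply: lam_sigma hf hlam => //; lra.
Qed.

From Stdlib Require Import Reals.
From mathcomp Require Import all_boot all_algebra.
From mathcomp Require Import Rstruct.
From Stdlib Require Import Lra.
Import Defs.

Module RhoZero.
Import GRing.Theory.
Local Open Scope ring_scope.

Lemma rho0_lam n (lam : nat -> R) :
  char_poly (Kmat n 0%R) = \prod_(k < n) ('X - (lam k)%:P) ->
  forall k, (k < n)%N -> lam k = 1.
Proof.
move=> H k hk.
have T : is_trig_mx (Kmat n 0%R).
{ apply/is_trig_mxP => i j hij. rewrite mxE /distn (ltnW hij).
  have -> : (j - i)%N = (j - i).-1.+1 by rewrite prednK // subn_gt0.
  by rewrite /= Rmult_0_l. }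
rewrite (char_poly_trig T) in H.
have := congr1 (fun p => p.[lam k]) H. rewrite !horner_prod.
under eq_bigr do rewrite hornerXsubC.
under [X in _ = X -> _]eq_bigr do rewrite hornerXsubC.
rewrite [X in _ = X -> _](bigD1 (Ordinal hk)) // subrr /= mul0r => /eqP.
move/prodf_eq0 => [i _].
rewrite mxE /distn leqnn subnn /= subr_eq0 => /eqP //.
Qed.
End RhoZero.

Local Open Scope R_scope.

Lemma sig_lo_bounds rho th : 0 < rho < 1 -> 0 < th < PI ->
  (1 - rho) / (1 + rho) < sigma rho th /\ sigma rho th < (1 + rho) / (1 - rho).
Proof.
move=> hr ht. rewrite sigmaE.
have sn : sin th <> 0 by have := sin_gt_0 th (proj1 ht) (proj2 ht); lra.
have hD := D_pos rho th sn.
have h1 := D_lt rho th (proj1 hr) (cos_gtm1 th (ltac:(lra)) (proj2 ht)).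
have h2 := D_gt rho th (proj1 hr) (cos_lt1 th (proj1 ht) (ltac:(lra))).
split.
- have -> : (1 - rho) / (1 + rho) = (1 - rho^2) / (rho + 1)^2 by field; lra.
  apply div_lt_num => //; nra.
- have -> : (1 + rho) / (1 - rho) = (1 - rho^2) / (rho - 1)^2 by field; lra.
  apply div_lt_num => //; nra.
Qed.

Lemma sig_lo_dec rho t1 t2 : 0 < rho < 1 -> 0 <= t1 -> t1 < t2 -> t2 <= PI ->
  sigma rho t2 < sigma rho t1.
Proof.
move=> hr *. rewrite !sigmaE. have := D_ge rho t1 (ltac:(lra)) => h.
apply div_lt_num; [nra| nra | apply D_mono => //; lra].
Qed.

Lemma sig_hi_inc rho t1 t2 : 1 < rho -> 0 <= t1 -> t1 < t2 -> t2 <= PI ->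
  sigma rho t1 < sigma rho t2.
Proof.
move=> hr *. rewrite !sigmaE. have := D_ge rho t1 (ltac:(lra)) => h.
apply div_lt_numn; [nra| nra | apply D_mono => //; lra].
Qed.

Lemma sig_hi_upper rho th : 1 < rho -> 0 <= th < PI -> sigma rho th < - ((rho - 1) / (rho + 1)).
Proof.
move=> hr ht. rewrite sigmaE. have := D_ge rho th (ltac:(lra)) => h.
have h1 := D_lt rho th (ltac:(lra)) (cos_gtm1 th (proj1 ht) (proj2 ht)).
have -> : - ((rho - 1) / (rho + 1)) = (1 - rho^2) / (rho + 1)^2 by field; lra.
apply div_lt_numn => //; nra.
Qed.

Lemma sig_hi_lower rho th : 1 < rho -> 0 < th <= PI -> - ((rho + 1) / (rho - 1)) < sigma rho th.
Proof.
move=> hr ht. rewrite sigmaE.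
have h1 := D_gt rho th (ltac:(lra)) (cos_lt1 th (proj1 ht) (proj2 ht)).
have -> : - ((rho + 1) / (rho - 1)) = (1 - rho^2) / (rho - 1)^2 by field; lra.
apply div_lt_numn => //; nra.
Qed.

Lemma sig_hi_ge rho th : 1 < rho -> - ((rho + 1) / (rho - 1)) <= sigma rho th /\ sigma rho th < 0.
Proof.
move=> hr. rewrite sigmaE. have h1 := D_ge rho th (ltac:(lra)).
have -> : - ((rho + 1) / (rho - 1)) = (1 - rho^2) / (rho - 1)^2 by field; lra.
split.
- case: (Rle_lt_or_eq_dec _ _ h1) => [h|<-]; last lra.
  left. apply div_lt_numn => //; nra.
- apply Rdiv_neg_pos; nra.
Qed.

Lemma extra_pos rho l : 1 < rho -> 0 < l -> extraordinary rho l.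
Proof.
move=> hr hl [|[|[|[th [_ e]]]]]; try lra.
have := sig_hi_ge rho th hr. lra.
Qed.

Lemma extra_neg rho l : 1 < rho -> l < - ((rho + 1) / (rho - 1)) -> extraordinary rho l.
Proof.
move=> hr hl [|[|[|[th [_ e]]]]]; try lra.
have := sig_hi_ge rho th hr. lra.
Qed.

Lemma ord_sig rho mu : 0 <= mu < PI -> ordinary rho (sigma rho mu).
Proof. move=> h. right; right; right. exists mu. split => //. have := PI_RGT_0. lra. Qed.

Lemma hi_order n rho lam k : (2 <= n)%N -> 1 < rho ->
  (forall k, (k < n)%N -> labeled n rho k (lam k)) ->
  (1 <= k)%N -> (k.+1 < n)%N -> ((2 <= k)%N \/ rho <= xi n) -> lam k < lam k.+1.
Proof.
move=> hn hr hl hk1 hk hd.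
have hkn : (k < n)%N by apply: ltn_trans hk.
case: (high_sigma n rho k (lam k) hn hk1 hkn hr hd (hl k hkn)) => m1 [h1 [h2 [_ [_ ->]]]].
case: (high_sigma n rho k.+1 (lam k.+1) hn isT hk hr (or_introl hk1) (hl k.+1 hk))
  => m2 [h1' [h2' [h3' [_ ->]]]].
have := beta_lt_alpha n k hn hk1. have := h3' hk1 => *.
apply sig_hi_inc => //; lra.
Qed.

Lemma lam0_hi n rho lam : (2 <= n)%N -> 1 < rho -> labeled n rho 0 lam -> INR n < lam.
Proof.
move=> hn hr hl. case: (lab0_h n rho lam (ltac:(lra)) hl) => x [hx [hf [_ ->]]].
case: (Rle_lt_or_eq_dec _ _ hx) => [xp|e].
- exact: Dh_gt.
- rewrite -e ch_0 in hf. lra.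
Qed.

Lemma lam1_hi n rho lam : (2 <= n)%N -> xi n < rho -> labeled n rho 1 lam -> lam < - INR n.
Proof.
move=> hn hr hl. case: (lab1_h n rho lam (ltac:(lra)) hl) => x [hx [hf ->]].
case: (Rle_lt_or_eq_dec _ _ hx) => [xp|e].
- have := Dh_gt n x hn xp. lra.
- rewrite -e sh_0 in hf. lra.
Qed.

Lemma xi_alg n rho : (2 <= n)%N -> xi n < rho -> - INR n < - ((rho + 1) / (rho - 1)).
Proof.
move=> hn hr. have := INR_ge2 hn => hN. have hx := xi_gt1 n hn.
rewrite /xi in hr. have h : INR n + 1 < rho * (INR n - 1).
{ have := Rmult_lt_compat_r (INR n - 1) _ _ (ltac:(lra)) hr.
  have -> : (INR n + 1) / (INR n - 1) * (INR n - 1) = INR n + 1 by field; lra. lra. }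
have : (rho + 1) / (rho - 1) < INR n. apply lt_div_l; rewrite /xi in hx; nra.
lra.
Qed.

Theorem aux6p6 (n : nat) (rho : R) (lam : nat -> R) :
  (2 <= n)%N -> (0 <= rho) ->
  char_poly (Kmat n rho) = (\prod_(k < n) ('X - (lam k)%:P))%R ->
  (forall k, (k < n)%N -> labeled n rho k (lam k)) ->
  ((xi n < rho -> extraordinary rho (lam 0%N) /\ extraordinary rho (lam 1%N) /\
                  forall k, (2 <= k < n)%N -> ordinary rho (lam k)) /\
   (1 < rho <= xi n -> extraordinary rho (lam 0%N) /\
                  forall k, (1 <= k < n)%N -> ordinary rho (lam k)) /\
   (0 <= rho <= 1 -> forall k, (k < n)%N -> ordinary rho (lam k))) /\
  ((rho = 0 -> forall k, (k < n)%N -> lam k = 1) /\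
   (0 < rho < 1 ->
      0 < (1 - rho) / (1 + rho) /\ (1 - rho) / (1 + rho) < lam (n - 1)%N /\
      (forall k, (k.+1 < n)%N -> lam k.+1 < lam k) /\
      lam 0%N < (1 + rho) / (1 - rho)) /\
   (rho = 1 -> (forall k, (1 <= k < n)%N -> lam k = 0) /\ 0 < lam 0%N /\ lam 0%N = INR n) /\
   (1 < rho < xi n ->
      - ((rho + 1) / (rho - 1)) < lam 1%N /\
      (forall k, (1 <= k)%N -> (k.+1 < n)%N -> lam k < lam k.+1) /\
      lam (n - 1)%N < - ((rho - 1) / (rho + 1)) /\ - ((rho - 1) / (rho + 1)) < 0 /\
      0 < INR n /\ INR n < lam 0%N) /\
   (rho = xi n ->
      - INR n = lam 1%N /\
      (forall k, (1 <= k)%N -> (k.+1 < n)%N -> lam k < lam k.+1) /\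
      lam (n - 1)%N < - (1 / INR n) /\ - (1 / INR n) < 0 /\
      0 < INR n /\ INR n < lam 0%N) /\
   (xi n < rho ->
      lam 1%N < - INR n /\ - INR n < - ((rho + 1) / (rho - 1)) /\
      (forall k, (2 <= k < n)%N ->
         - ((rho + 1) / (rho - 1)) < lam k /\ lam k < - ((rho - 1) / (rho + 1))) /\
      (forall k, (2 <= k)%N -> (k.+1 < n)%N -> lam k < lam k.+1) /\
      - ((rho + 1) / (rho - 1)) < - ((rho - 1) / (rho + 1)) /\
      - ((rho - 1) / (rho + 1)) < 0 /\ 0 < INR n /\ INR n < lam 0%N)).
Proof.
move=> hn hr hcp hl.
have hN := INR_ge2 hn. have hxi := xi_gt1 n hn.
have hn0 : (0 < n)%N by apply: ltn_trans hn.
have hn1 : (1 < n)%N by [].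
have hl0 := hl 0%N hn0. have hl1 := hl 1%N hn1.
have hnm1 : (n - 1 < n)%N by rewrite subn1 prednK // ltnSn.
have hnm1' : (1 <= n - 1)%N by rewrite subn1 -ltnS prednK.
have upper : forall k, 1 < rho -> (1 <= k < n)%N -> ((2 <= k)%N \/ rho <= xi n) ->
    lam k < - ((rho - 1) / (rho + 1)).
{ move=> k h1 /andP [hk1 hk] hd.
  case: (high_sigma n rho k (lam k) hn hk1 hk h1 hd (hl k hk)) => m [hm [_ [_ [_ ->]]]].
  exact: sig_hi_upper. }
have ordhi : forall k, 1 < rho -> (1 <= k < n)%N -> ((2 <= k)%N \/ rho <= xi n) ->
    ordinary rho (lam k).
{ move=> k h1 /andP [hk1 hk] hd.
  case: (high_sigma n rho k (lam k) hn hk1 hk h1 hd (hl k hk)) => m [hm [_ [_ [_ ->]]]].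
  exact: ord_sig. }
split; [split; [|split]|split; [|split; [|split; [|split; [|split]]]]].
-
  move=> h. have h1 : 1 < rho by lra.
  split; first by apply: extra_pos => //; have := lam0_hi n rho (lam 0%N) hn h1 hl0; lra.
  split; first by apply: extra_neg => //; have := lam1_hi n rho (lam 1%N) hn h hl1; have := xi_alg n rho hn h; lra.
  move=> k /andP [hk2 hk]. apply: ordhi => //. by rewrite (leq_trans _ hk2). by left.
- move=> h. split; first by apply: extra_pos; [lra|]; have := lam0_hi n rho (lam 0%N) hn (proj1 h) hl0; lra.
  move=> k hk. apply: ordhi => //; [lra|by right; lra].
- move=> h k hk. case: (Rle_lt_or_eq_dec 0 rho hr) => [rp|<-]; last by left.
  case: (Rle_lt_or_eq_dec rho 1 (proj2 h)) => [r1|->]; last by right; left.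
  case: (low_sigma n rho k (lam k) hn hk (ltac:(lra)) (or_intror r1) (hl k hk)) => m [_ [hm ->]].
  apply: ord_sig; lra.
- move=> e k hk. rewrite e in hcp. exact: (RhoZero.rho0_lam n lam hcp k hk).
- move=> h. split; first by apply Rdiv_lt_0_compat; lra.
  split.
  { case: (low_sigma n rho (n-1) (lam (n-1)%N) hn hnm1 (ltac:(lra)) (or_intror (proj2 h)) (hl _ hnm1))
      => m [_ [hm ->]]. by case: (sig_lo_bounds rho m h hm). }
  split.
  { move=> k hk. have hkn : (k < n)%N by apply: ltn_trans hk.
    case: (low_sigma n rho k (lam k) hn hkn (ltac:(lra)) (or_intror (proj2 h)) (hl k hkn))
      => m1 [hI1 [hm1 ->]].
    case: (low_sigma n rho k.+1 (lam k.+1) hn hk (ltac:(lra)) (or_intror (proj2 h)) (hl k.+1 hk))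
      => m2 [hI2 [hm2 ->]].
    have := gamma_lt_beta n k hn => *. apply sig_lo_dec => //; lra. }
  case: (low_sigma n rho 0 (lam 0%N) hn hn0 (ltac:(lra)) (or_intror (proj2 h)) hl0)
      => m [_ [hm ->]]. by case: (sig_lo_bounds rho m h hm).
- move=> e. split.
  { move=> k /andP [hk1 hk].
    case: (low_sigma n rho k (lam k) hn hk (ltac:(lra)) (or_introl hk1) (hl k hk)) => m [_ [hm ->]].
    rewrite e sigmaE. have -> : 1 - 1^2 = 0 by ring. rewrite /Rdiv Rmult_0_l //. }
  case: (lab0_h n rho (lam 0%N) (ltac:(lra)) hl0) => x [hx [hf [hu ->]]].
  have x0 : 0 = x by apply: hu; [lra| rewrite ch_0; lra].
  rewrite -x0 Dh_0. lra.
- move=> h. have h1 : 1 < rho by lra.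
  split.
  { case: (high_sigma n rho 1 (lam 1%N) hn isT hn1 h1 (or_intror (Rlt_le _ _ (proj2 h))) hl1)
      => m [hm [_ [_ [hm0 ->]]]].
    apply: sig_hi_lower => //. case: (Rle_lt_or_eq_dec 0 m (proj1 hm)) => [mp|e]; first lra.
    have := hm0 (esym e). lra. }
  split; first by move=> k hk1 hk; exact: (hi_order n rho lam k hn h1 hl hk1 hk (or_intror (Rlt_le _ _ (proj2 h)))).
  split; first by apply: (upper (n-1)%N h1); [by rewrite hnm1' hnm1| right; lra].
  split. { have : 0 < (rho - 1) / (rho + 1) by apply Rdiv_lt_0_compat; lra. lra. }
  split; first lra. exact: (lam0_hi n rho (lam 0%N) hn h1 hl0).
- move=> e. have h1 : 1 < rho by lra.
  split.
  { case: (lab_high1 n rho (lam 1%N) (ltac:(lra)) hl1) => m [hm [hf [hu ->]]].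
    have m0 : 0 = m by apply: hu; [have := beta_pos n 1 hn isT; lra | rewrite st_0; lra].
    by rewrite -m0 Dt_0. }
  split; first by move=> k hk1 hk; exact: (hi_order n rho lam k hn h1 hl hk1 hk (or_intror (Req_le _ _ e))).
  have E : - ((rho - 1) / (rho + 1)) = - (1 / INR n) by rewrite e /xi; field; lra.
  split; first by rewrite -E; apply: (upper (n-1)%N h1); [by rewrite hnm1' hnm1| right; lra].
  split. { have : 0 < 1 / INR n by apply Rdiv_lt_0_compat; lra. lra. }
  split; first lra. exact: (lam0_hi n rho (lam 0%N) hn h1 hl0).
- move=> h. have h1 : 1 < rho by lra.
  split; first exact: (lam1_hi n rho (lam 1%N) hn h hl1).
  split; first exact: (xi_alg n rho hn h).
  split.
  { move=> k /andP [hk2 hk]. have hk1 : (1 <= k)%N by rewrite (leq_trans _ hk2).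
    case: (high_sigma n rho k (lam k) hn hk1 hk h1 (or_introl hk2) (hl k hk))
      => m [hm [hb [ha [_ ->]]]].
    have := alpha_pos n k hn hk2. have := ha hk2 => *.
    split; [apply: sig_hi_lower|apply: sig_hi_upper] => //; lra. }
  split; first by move=> k hk2 hk; exact: (hi_order n rho lam k hn h1 hl (ltnW hk2) hk (or_introl hk2)).
  have : 0 < (rho - 1) / (rho + 1) by apply Rdiv_lt_0_compat; lra.
  have : (rho - 1) / (rho + 1) < 1 by apply lt_div_l; lra.
  have : 1 < (rho + 1) / (rho - 1) by apply lt_div_r; lra.
  move=> *. split; first lra. split; first lra. split; first lra. exact: (lam0_hi n rho (lam 0%N) hn h1 hl0).
Qed.

Lemma ltR_iff (x y : R) : (x < y)%R <-> Rlt x y.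
Proof. split; by move/RltP. Qed.
Lemma ltlt_iff (x y z : R) : (x < y < z)%R <-> (Rlt x y /\ Rlt y z).
Proof. split; [by move/andP => [/RltP ? /RltP ?]| by move=> [/RltP -> /RltP ->]]. Qed.
Lemma ltle_iff (x y z : R) : (x < y <= z)%R <-> (Rlt x y /\ Rle y z).
Proof. split; [by move/andP => [/RltP ? /RleP ?]| by move=> [/RltP -> /RleP ->]]. Qed.
Lemma lele_iff (x y z : R) : (x <= y <= z)%R <-> (Rle x y /\ Rle y z).
Proof. split; [by move/andP => [/RleP ? /RleP ?]| by move=> [/RleP -> /RleP ->]]. Qed.
Lemma leR_iff (x y : R) : (x <= y)%R <-> Rle x y.
Proof. split; by move/RleP. Qed.

Theorem theorem6p6 (n : nat) (rho : R) (lam : nat -> R) :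
  (2 <= n)%N -> (0 <= rho)%R ->
  (* lam 0, ..., lam (n-1) are the eigenvalues of K_n(rho) (with multiplicity) *)
  char_poly (Kmat n rho) = (\prod_(k < n) ('X - (lam k)%:P))%R ->
  (* ... labeled as described in the context *)
  (forall k, (k < n)%N -> labeled n rho k (lam k)) ->
  ((* number of extraordinary eigenvalues *)
   (xi n < rho -> extraordinary rho (lam 0) /\ extraordinary rho (lam 1) /\
                  forall k, (2 <= k < n)%N -> ordinary rho (lam k)) /\
   (1 < rho <= xi n -> extraordinary rho (lam 0) /\
                  forall k, (1 <= k < n)%N -> ordinary rho (lam k)) /\
   (0 <= rho <= 1 -> forall k, (k < n)%N -> ordinary rho (lam k)))%R /\
  ((* orderings *)
   (rho = 0 -> forall k, (k < n)%N -> lam k = 1) /\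
   (0 < rho < 1 ->
      0 < (1 - rho) / (1 + rho) /\ (1 - rho) / (1 + rho) < lam (n - 1)%N /\
      (forall k, (k.+1 < n)%N -> lam k.+1 < lam k) /\
      lam 0%N < (1 + rho) / (1 - rho)) /\
   (rho = 1 -> (forall k, (1 <= k < n)%N -> lam k = 0) /\ 0 < lam 0%N /\ lam 0%N = INR n) /\
   (1 < rho < xi n ->
      - ((rho + 1) / (rho - 1)) < lam 1%N /\
      (forall k, (1 <= k)%N -> (k.+1 < n)%N -> lam k < lam k.+1) /\
      lam (n - 1)%N < - ((rho - 1) / (rho + 1)) /\ - ((rho - 1) / (rho + 1)) < 0 /\
      0 < INR n /\ INR n < lam 0%N) /\
   (rho = xi n ->
      - INR n = lam 1%N /\
      (forall k, (1 <= k)%N -> (k.+1 < n)%N -> lam k < lam k.+1) /\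
      lam (n - 1)%N < - (1 / INR n) /\ - (1 / INR n) < 0 /\
      0 < INR n /\ INR n < lam 0%N) /\
   (xi n < rho ->
      lam 1%N < - INR n /\ - INR n < - ((rho + 1) / (rho - 1)) /\
      (forall k, (2 <= k < n)%N ->
         - ((rho + 1) / (rho - 1)) < lam k /\ lam k < - ((rho - 1) / (rho + 1))) /\
      (forall k, (2 <= k)%N -> (k.+1 < n)%N -> lam k < lam k.+1) /\
      - ((rho + 1) / (rho - 1)) < - ((rho - 1) / (rho + 1)) /\
      - ((rho - 1) / (rho + 1)) < 0 /\ 0 < INR n /\ INR n < lam 0%N))%R.
Proof.
move=> hn /RleP hr hcp hl.
have H := aux6p6 n rho lam hn hr hcp hl.
repeat setoid_rewrite ltlt_iff. repeat setoid_rewrite ltle_iff. repeat setoid_rewrite lele_iff. repeat setoid_rewrite ltR_iff. repeat setoid_rewrite leR_iff.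
exact H.
Qed.
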